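(* Let $R$ be a division ring and let $\{p_n(x)\}_{n\ge0}\subseteq R[x]$ and $\{q_n(y)\}_{n\ge0}\subseteq R[y]$ be polynomials with $\deg p_n=\deg q_n=n$ for all $n$. For any sequence $\{c_k\}_{k\in\mathbb{Z}_{\ge0}}$ in $R$ there exists a unique family of bimoments $\{I_{a,b}\}_{a,b\in\mathbb{Z}_{\ge0}}\subseteq R$ such that, for the associated pairing, $\langle p_n,q_m\rangle=0$ for all $n\neq m$ and $\langle p_k,q_k\rangle=c_k$ for all $k$.
   Context: Elements of $R[x]$ are written $\sum_i a_i x^i$ and elements of $R[y]$ as $\sum_j y^j b_j$ with coefficients in $R$. A family $\{I_{a,b}\}$ of elements of $R$ (bimoments) determines the pairing $\langle\cdot,\cdot\rangle:R[x]\times R[y]\to R$, $\langle \sum_i a_i x^i,\sum_j y^j b_j\rangle=\sum_{i,j}a_iI_{i,j}b_j$. *)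

(* Defs.v *)
From HB Require Import structures.
From mathcomp Require Import all_boot all_order all_algebra.
Set Implicit Arguments. Unset Strict Implicit. Unset Printing Implicit Defensive.
Import GRing.Theory.
Local Open Scope ring_scope.

(* Polynomials in R[x] and R[y] are both represented by {poly R}
   (coefficient sequences); coefficients of p are multiplied on the left,
   those of q on the right. *)
Definition bipairing (R : nzRingType) (I : nat -> nat -> R) (p q : {poly R}) : R :=
  \sum_(i < size p) \sum_(j < size q) p`_i * I i j * q`_j.

(* Main.v *)
Require Import Defs.
From HB Require Import structures.
From mathcomp Require Import all_boot all_order all_algebra.
Import GRing.Theory.
From mathcomp Require Import zify.
Local Open Scope ring_scope.

Section Alg.
Variable R : unitRingType.
Lemma triple_sum (P : nat -> R) (A : nat -> nat -> R) (C : nat -> R) (B : nat -> nat -> R) (Q : nat -> R) N M L :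
  \sum_(i<N)\sum_(j<M) P i * (\sum_(k<L) A i k * C k * B j k) * Q j =
  \sum_(k<L) (\sum_(i<N) P i * A i k) * C k * (\sum_(j<M) B j k * Q j).
Proof.
transitivity (\sum_(i<N)\sum_(j<M)\sum_(k<L) P i * A i k * C k * (B j k * Q j)).
  apply: eq_bigr => i _; apply: eq_bigr => j _.
  rewrite mulr_sumr mulr_suml; apply: eq_bigr => k _; by rewrite !mulrA.
symmetry.
transitivity (\sum_(k<L)\sum_(i<N)\sum_(j<M) P i * A i k * C k * (B j k * Q j)).
  apply: eq_bigr => k _; rewrite !mulr_suml; apply: eq_bigr => i _.
  by rewrite mulr_sumr.
rewrite exchange_big; apply: eq_bigr => i _; by rewrite exchange_big.
Qed.

Lemma quad_sum (A : nat -> R) (X : nat -> nat -> R) (I : nat -> nat -> R) (Y : nat -> nat -> R) (B : nat -> R) N M K L :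
  \sum_(i<N)\sum_(j<M) (\sum_(k<K) A k * X k i) * I i j * (\sum_(l<L) Y l j * B l) =
  \sum_(k<K)\sum_(l<L) A k * (\sum_(i<N)\sum_(j<M) X k i * I i j * Y l j) * B l.
Proof.
transitivity (\sum_(i<N)\sum_(j<M)\sum_(k<K)\sum_(l<L) A k * (X k i * I i j * Y l j) * B l).
  apply: eq_bigr => i _; apply: eq_bigr => j _.
  rewrite !mulr_suml; apply: eq_bigr => k _; rewrite mulr_sumr; apply: eq_bigr => l _.
  by rewrite !mulrA.
transitivity (\sum_(i<N)\sum_(k<K)\sum_(l<L)\sum_(j<M) A k * (X k i * I i j * Y l j) * B l).
  apply: eq_bigr => i _; rewrite exchange_big; apply: eq_bigr => k _; by rewrite exchange_big.
rewrite exchange_big; apply: eq_bigr => k _.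
transitivity (\sum_(l<L)\sum_(i<N)\sum_(j<M) A k * (X k i * I i j * Y l j) * B l).
  by rewrite exchange_big.
apply: eq_bigr => l _; rewrite mulr_sumr mulr_suml; apply: eq_bigr => i _.
by rewrite mulr_sumr mulr_suml.
Qed.
End Alg.

Section Aux.
Variable R : unitRingType.

Lemma sum_widen (F : nat -> R) n N : (n <= N)%N -> (forall k, (n <= k)%N -> F k = 0) ->
  \sum_(k < n) F k = \sum_(k < N) F k.
Proof.
move=> nN HF; rewrite (big_ord_widen N F nN) big_mkcond /=.
apply: eq_bigr => k _; case: ifP => // /negbT; rewrite -leqNgt => /HF ->//.
Qed.

Lemma dsum_l (F : nat -> R) i S : (i < S)%N -> \sum_(k < S) ((k : nat) == i)%:R * F k = F i.
Proof.
move=> iS; rewrite (bigD1 (Ordinal iS)) //= eqxx mul1r big1 ?addr0 // => k Hk.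
rewrite (_ : (k == i :> nat) = false) ?mul0r //; apply/negbTE; apply: contra Hk => /eqP Hki.
by apply/eqP; apply: val_inj.
Qed.

Lemma dsum_r (F : nat -> R) i S : (i < S)%N -> \sum_(k < S) F k * ((k : nat) == i)%:R = F i.
Proof.
move=> iS; rewrite (bigD1 (Ordinal iS)) //= eqxx mulr1 big1 ?addr0 // => k Hk.
rewrite (_ : (k == i :> nat) = false) ?mulr0 //; apply/negbTE; apply: contra Hk => /eqP Hki.
by apply/eqP; apply: val_inj.
Qed.

Lemma bip_sum I (f g : {poly R}) N M : (size f <= N)%N -> (size g <= M)%N ->
  bipairing I f g = \sum_(i < N) \sum_(j < M) f`_i * I i j * g`_j.
Proof.
move=> Hf Hg; rewrite /bipairing.
rewrite (@sum_widen (fun i => \sum_(j < size g) f`_i * I i j * g`_j) _ _ Hf); last first.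
  by move=> k Hk; rewrite nth_default // big1 // => j _; rewrite !mul0r.
apply: eq_bigr => i _.
rewrite (@sum_widen (fun j => f`_i * I i j * g`_j) _ _ Hg) //.
by move=> k Hk; rewrite [g`_k]nth_default // mulr0.
Qed.

Variable hdiv : forall x : R, x != 0 -> x \is a GRing.unit.
Variables (p q : nat -> {poly R}).
Hypothesis hp : forall n, size (p n) = n.+1.
Hypothesis hq : forall n, size (q n) = n.+1.

Lemma up n : (p n)`_n \is a GRing.unit.
Proof.
apply: hdiv; have -> : (p n)`_n = lead_coef (p n) by rewrite lead_coefE hp.
by rewrite lead_coef_eq0 -size_poly_eq0 hp.
Qed.

Lemma uq n : (q n)`_n \is a GRing.unit.
Proof.
apply: hdiv; have -> : (q n)`_n = lead_coef (q n) by rewrite lead_coefE hq.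
by rewrite lead_coef_eq0 -size_poly_eq0 hq.
Qed.

Lemma p_hi k t : (k < t)%N -> (p k)`_t = 0.
Proof. by move=> kt; rewrite nth_default // hp. Qed.
Lemma q_hi k t : (k < t)%N -> (q k)`_t = 0.
Proof. by move=> kt; rewrite nth_default // hq. Qed.

Fixpoint exP (N : nat) (f : {poly R}) : nat -> R :=
  match N with
  | 0 => fun _ => 0
  | N'.+1 => let a := f`_N' * ((p N')`_N')^-1 in
      fun k => if k == N' then a else exP N' (f - a%:P * p N') k
  end.

Fixpoint exQ (N : nat) (f : {poly R}) : nat -> R :=
  match N with
  | 0 => fun _ => 0
  | N'.+1 => let a := ((q N')`_N')^-1 * f`_N' in
      fun k => if k == N' then a else exQ N' (f - q N' * a%:P) k
  end.

Lemma exP_hi N f k : (N <= k)%N -> exP N f k = 0.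
Proof.
elim: N f k => //= N IH f k Hk.
by rewrite (gtn_eqF Hk) IH // ltnW.
Qed.

Lemma exQ_hi N f k : (N <= k)%N -> exQ N f k = 0.
Proof.
elim: N f k => //= N IH f k Hk.
by rewrite (gtn_eqF Hk) IH // ltnW.
Qed.

Lemma exP_spec N (f : {poly R}) : (size f <= N)%N -> forall t, f`_t = \sum_(k < N) exP N f k * (p k)`_t.
Proof.
elim: N f => [|N IH] f Hf t.
  by rewrite big_ord0; move: Hf; rewrite leqn0 size_poly_eq0 => /eqP ->; rewrite coef0.
rewrite big_ord_recr /= eqxx.
set a := f`_N * ((p N)`_N)^-1.
have Hg : (size (f - a%:P * p N)%R <= N)%N.
  apply/leq_sizeP => j Hj; rewrite coefB coefCM.
  case: (ltngtP j N) Hj => // [Hj _|-> _].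
    by rewrite !nth_default ?hp ?mulr0 ?subrr //; apply: leq_trans Hf Hj.
  by rewrite /a divrK ?subrr // up.
have := IH _ Hg t; rewrite coefB coefCM => /eqP; rewrite subr_eq => /eqP ->.
congr (_ + _); apply: eq_bigr => k _; by rewrite (ltn_eqF (ltn_ord k)).
Qed.

Lemma exQ_spec N (f : {poly R}) : (size f <= N)%N -> forall t, f`_t = \sum_(k < N) (q k)`_t * exQ N f k.
Proof.
elim: N f => [|N IH] f Hf t.
  by rewrite big_ord0; move: Hf; rewrite leqn0 size_poly_eq0 => /eqP ->; rewrite coef0.
rewrite big_ord_recr /= eqxx.
set a := ((q N)`_N)^-1 * f`_N.
have Hg : (size (f - q N * a%:P)%R <= N)%N.
  apply/leq_sizeP => j Hj; rewrite coefB coefMC.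
  case: (ltngtP j N) Hj => // [Hj _|-> _].
    by rewrite !nth_default ?hq ?mul0r ?subrr //; apply: leq_trans Hf Hj.
  by rewrite /a mulVKr ?subrr // uq.
have := IH _ Hg t; rewrite coefB coefMC => /eqP; rewrite subr_eq => /eqP ->.
congr (_ + _); apply: eq_bigr => k _; by rewrite (ltn_eqF (ltn_ord k)).
Qed.

Lemma indepP N (d : nat -> R) : (forall t, \sum_(k < N) d k * (p k)`_t = 0) ->
  forall k, (k < N)%N -> d k = 0.
Proof.
elim: N d => // N IH d H.
have dN : d N = 0.
  have := H N; rewrite big_ord_recr /= big1 ?add0r.
    by move=> H0; rewrite -(mulrK (up N) (d N)) H0 mul0r.
  by move=> k _; rewrite p_hi ?mulr0.
move=> k; rewrite ltnS leq_eqVlt => /orP [/eqP -> //|]; apply: IH => t.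
by have := H t; rewrite big_ord_recr /= dN mul0r addr0.
Qed.

Lemma indepQ N (d : nat -> R) : (forall t, \sum_(k < N) (q k)`_t * d k = 0) ->
  forall k, (k < N)%N -> d k = 0.
Proof.
elim: N d => // N IH d H.
have dN : d N = 0.
  have := H N; rewrite big_ord_recr /= big1 ?add0r.
    by move=> H0; rewrite -(mulKr (uq N) (d N)) H0 mulr0.
  by move=> k _; rewrite q_hi ?mul0r.
move=> k; rewrite ltnS leq_eqVlt => /orP [/eqP -> //|]; apply: IH => t.
by have := H t; rewrite big_ord_recr /= dN mulr0 addr0.
Qed.


Definition aa i k := exP i.+1 'X^i k.
Definition bb j k := exQ j.+1 'X^j k.

Lemma aa_spec i t : ((t == i)%:R : R) = \sum_(k < i.+1) aa i k * (p k)`_t.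
Proof. by rewrite -coefXn; apply: exP_spec; rewrite size_polyXn. Qed.
Lemma bb_spec j t : ((t == j)%:R : R) = \sum_(k < j.+1) (q k)`_t * bb j k.
Proof. by rewrite -coefXn; apply: exQ_spec; rewrite size_polyXn. Qed.
Lemma aa_hi i k : (i < k)%N -> aa i k = 0.
Proof. by move=> H; apply: exP_hi. Qed.
Lemma bb_hi i k : (i < k)%N -> bb i k = 0.
Proof. by move=> H; apply: exQ_hi. Qed.

Lemma aa_specW i t L : (i < L)%N -> ((t == i)%:R : R) = \sum_(k < L) aa i k * (p k)`_t.
Proof.
move=> iL; rewrite aa_spec; apply: (sum_widen (fun k => aa i k * (p k)`_t)) => // k Hk; by rewrite aa_hi ?mul0r.
Qed.
Lemma bb_specW j t L : (j < L)%N -> ((t == j)%:R : R) = \sum_(k < L) (q k)`_t * bb j k.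
Proof.
move=> iL; rewrite bb_spec; apply: (sum_widen (fun k => (q k)`_t * bb j k)) => // k Hk; by rewrite bb_hi ?mulr0.
Qed.

Lemma deltaP n k : \sum_(i < n.+1) (p n)`_i * aa i k = (k == n)%:R.
Proof.
case: (ltnP k n.+1) => Hk; last first.
  rewrite big1 ?(gtn_eqF Hk) // => i _; by rewrite aa_hi ?mulr0 // (leq_trans (ltn_ord i)).
apply/eqP; rewrite -subr_eq0; apply/eqP; move: k Hk.
apply: (@indepP n.+1 (fun k => \sum_(i < n.+1) (p n)`_i * aa i k - (k == n)%:R)) => t.
under eq_bigr do rewrite mulrBl.
rewrite sumrB (dsum_l (fun k => (p k)`_t)) //.
apply/eqP; rewrite subr_eq0; apply/eqP.
transitivity (\sum_(i < n.+1) (p n)`_i * (\sum_(k < n.+1) aa i k * (p k)`_t)).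
  under eq_bigr do rewrite mulr_suml.
  rewrite exchange_big; apply: eq_bigr => i _; rewrite mulr_sumr.
  by apply: eq_bigr => k _; rewrite mulrA.
under eq_bigr => i _ do rewrite -(@aa_specW i t _ (ltn_ord i)).
case: (ltnP t n.+1) => Ht.
  by under eq_bigr do rewrite eq_sym; rewrite (dsum_r (fun i => (p n)`_i)).
rewrite p_hi // big1 // => i _; by rewrite (gtn_eqF (leq_trans (ltn_ord i) Ht)) mulr0.
Qed.

Lemma deltaQ m k : \sum_(j < m.+1) bb j k * (q m)`_j = (k == m)%:R.
Proof.
case: (ltnP k m.+1) => Hk; last first.
  rewrite big1 ?(gtn_eqF Hk) // => i _; by rewrite bb_hi ?mul0r // (leq_trans (ltn_ord i)).
apply/eqP; rewrite -subr_eq0; apply/eqP; move: k Hk.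
apply: (@indepQ m.+1 (fun k => \sum_(j < m.+1) bb j k * (q m)`_j - (k == m)%:R)) => t.
under eq_bigr do rewrite mulrBr.
rewrite sumrB (dsum_r (fun k => (q k)`_t)) //.
apply/eqP; rewrite subr_eq0; apply/eqP.
transitivity (\sum_(j < m.+1) (\sum_(k < m.+1) (q k)`_t * bb j k) * (q m)`_j).
  under eq_bigr do rewrite mulr_sumr.
  rewrite exchange_big; apply: eq_bigr => i _; rewrite mulr_suml.
  by apply: eq_bigr => k _; rewrite mulrA.
under eq_bigr => i _ do rewrite -(@bb_specW i t _ (ltn_ord i)).
case: (ltnP t m.+1) => Ht.
  by under eq_bigr do rewrite eq_sym; rewrite (dsum_l (fun i => (q m)`_i)).
rewrite q_hi // big1 // => i _; by rewrite (gtn_eqF (leq_trans (ltn_ord i) Ht)) mul0r.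
Qed.

Variable c : nat -> R.
Definition I0 i j := \sum_(k < i.+1) aa i k * c k * bb j k.

Lemma I0_widen i j L : (i < L)%N -> I0 i j = \sum_(k < L) aa i k * c k * bb j k.
Proof. move=> iL; apply: (sum_widen (fun k => aa i k * c k * bb j k)) => // k Hk; by rewrite aa_hi ?mul0r. Qed.

Lemma I0_pair n m : bipairing I0 (p n) (q m) = c n * (m == n)%:R.
Proof.
rewrite (@bip_sum I0 (p n) (q m) n.+1 m.+1) ?hp ?hq //.
transitivity (\sum_(i<n.+1)\sum_(j<m.+1) (p n)`_i * (\sum_(k<n.+1) aa i k * c k * bb j k) * (q m)`_j).
  apply: eq_bigr => i _; apply: eq_bigr => j _; by rewrite (@I0_widen i j _ (ltn_ord i)).
rewrite triple_sum.
under eq_bigr do rewrite deltaP deltaQ -mulrA.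
by rewrite (dsum_l (fun k => c k * (k == m)%:R)) // eq_sym.
Qed.

Lemma uniqI (I : nat -> nat -> R) :
  (forall n m, n <> m -> bipairing I (p n) (q m) = 0) ->
  (forall k, bipairing I (p k) (q k) = c k) -> forall i j, I i j = I0 i j.
Proof.
move=> H1 H2 i j.
have HI : forall k l, bipairing I (p k) (q l) = c k * (l == k)%:R.
  move=> k l; case: eqP => [->|/nesym ?]; by rewrite ?mulr1 ?mulr0 ?H2 ?H1.
set S := (i.+1 + j.+1)%N.
have iS : (i < S)%N by rewrite /S; lia.
have jS : (j < S)%N by rewrite /S; lia.
transitivity (\sum_(i'<S)\sum_(j'<S) ((i' : nat) == i)%:R * I i' j' * ((j' : nat) == j)%:R).
  rewrite -(@dsum_l (fun i' => I i' j) i S iS); apply: eq_bigr => i' _.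
  rewrite (@dsum_r (fun j' => ((i' : nat) == i)%:R * I i' j') j S jS).
  by [].  
under eq_bigr => i' _ do under eq_bigr => j' _ do rewrite (@aa_specW i i' _ iS) (@bb_specW j j' _ jS).
rewrite (@quad_sum R (fun k => aa i k) (fun k i' => (p k)`_i') I (fun l j' => (q l)`_j') (fun l => bb j l)) (@I0_widen i j _ iS).
apply: eq_bigr => k _.
under eq_bigr => l _ do rewrite -(bip_sum I (p k) (q l)) ?hp ?hq ?(ltn_ord k) ?(ltn_ord l) // HI.
rewrite (bigD1 (Ordinal (ltn_ord k))) //= eqxx mulr1 big1 ?addr0 // => l Hl.
rewrite (_ : (l == k :> nat) = false) ?mulr0 ?mul0r //; apply/negbTE; apply: contra Hl => /eqP Hlk.
by apply/eqP; apply: val_inj.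
Qed.

End Aux.

From Stdlib Require Import FunctionalExtensionality.

Theorem mainTheorem4 (R : unitRingType)
  (hdiv : forall x : R, x != 0 -> x \is a GRing.unit)
  (p q : nat -> {poly R})
  (hp : forall n, size (p n) = n.+1)
  (hq : forall n, size (q n) = n.+1)
  (c : nat -> R) :
  exists! I : nat -> nat -> R,
    (forall n m, n <> m -> bipairing I (p n) (q m) = 0) /\
    (forall k, bipairing I (p k) (q k) = c k).
Proof.
exists (@I0 R p q c); split.
  split.
    by move=> n m nm; rewrite (@I0_pair R hdiv p q hp hq); case: eqP => [/esym//|]; rewrite mulr0.
  by move=> k; rewrite (@I0_pair R hdiv p q hp hq) eqxx mulr1.
move=> I [H1 H2]; apply: functional_extensionality => i.
apply: functional_extensionality => j; symmetry; exact: (@uniqI R hdiv p q hp hq c I H1 H2).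
Qed.
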